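(* Let a target $T$ be fixed at a point $(x_T,y_T)\in\mathbb{R}^2$, and consider a UAV with dynamics $\dot x=V\cos\psi$, $\dot y=V\sin\psi$, $\dot\psi=\omega$, $V>0$ constant. Let $r(t)$ be the distance from the UAV to $T$ and $\theta(t)\in[0,2\pi)$ the bearing angle. Equivalently, in these variables $\dot r=-V\cos\theta$, $\dot\theta=\omega+\frac{V\sin\theta}{r}$. Let the control input be $$\omega=\begin{cases} k\left[V\cos\!\left(\pi-\sin^{-1}\!\left(\frac{r_a}{r(t)}\right)\right)-\dot r(t)\right], & r(t)\ge r_a,\\ 0,&\text{otherwise},\end{cases}$$ with constants $k>0$ and $r_a\ge 0$. Suppose there is $t_0\ge 0$ such that $r(t_0)\ge r_a$ and $\theta(t_0)\in\left(\sin^{-1}\!\left(\frac{r_a}{r(t_0)}\right),\,2\pi-\sin^{-1}\!\left(\frac{r_a}{r(t_0)}\right)\right)$. Then $r(t)\ge r_a$ for all $t\ge t_0$.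
   Context: The bearing angle $\theta(t)\in[0,2\pi)$ is the angle measured counterclockwise from the vector pointing from the UAV's current position to $T$ to the UAV's current heading direction $(\cos\psi,\sin\psi)$. $\sin^{-1}$ is the principal arcsine. *)

(* Defs.v *)
From Stdlib Require Import Reals.
From Coquelicot Require Import Coquelicot.
Open Scope R_scope.

Definition dist_to_target (x y : R -> R) (xT yT : R) (t : R) : R :=
  sqrt ((x t - xT) ^ 2 + (y t - yT) ^ 2).

(* th is the bearing angle at time t: the angle in [0, 2*PI) measured
   counterclockwise from the vector u = T - p(t) (UAV -> target) to the heading
   direction h = (cos psi, sin psi); i.e. |u| cos th = u . h and
   |u| sin th = u x h (2-d cross product). *)
Definition is_bearing (x y psi : R -> R) (xT yT : R) (t th : R) : Prop :=
  0 <= th < 2 * PI /\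
  dist_to_target x y xT yT t * cos th
    = (xT - x t) * cos (psi t) + (yT - y t) * sin (psi t) /\
  dist_to_target x y xT yT t * sin th
    = (xT - x t) * sin (psi t) - (yT - y t) * cos (psi t).

Definition control (k V ra : R) (r : R -> R) (t : R) : R :=
  if Rle_dec ra (r t)
  then k * (V * cos (PI - asin (ra / r t)) - Derive r t)
  else 0.

(* Main.v *)
Require Import Defs.
From Stdlib Require Import Reals Lra.
From Coquelicot Require Import Coquelicot.
Open Scope R_scope.

Ltac simplD H := simpl in H; unfold mult, plus, minus, opp, zero, scal in H; simpl in H;
  unfold mult, plus, minus, opp, zero in H; simpl in H.

Lemma is_derive_eqv (f g : R -> R) (u l1 l2 : R) :
  is_derive f u l1 -> (forall t, f t = g t) -> l1 = l2 -> is_derive g u l2.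
Proof.
  intros H He <-. apply (is_derive_ext f g); auto.
Qed.

Lemma deriv_cont f u l : is_derive f u l -> continuity_pt f u.
Proof.
  intros H. apply derivable_continuous_pt.
  exists l. apply is_derive_Reals. exact H.
Qed.

Lemma closed_le (f : R -> R) a t c : a < t -> continuity_pt f t ->
  (forall u, a <= u < t -> f u <= c) -> f t <= c.
Proof.
  intros Hat Hc Hf. destruct (Rle_or_lt (f t) c) as [h|h]; [exact h|exfalso].
  unfold continuity_pt, continue_in, limit1_in, limit_in in Hc.
  destruct (Hc (f t - c)) as [alp [Halp H]]; [lra|].
  assert (Hm1 : 0 < Rmin alp (t-a)) by (apply Rmin_pos; lra).
  assert (Rmin alp (t-a) <= alp) by apply Rmin_l.
  assert (Rmin alp (t-a) <= t-a) by apply Rmin_r.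
  set (u := t - Rmin alp (t - a) / 2).
  assert (Hu: a <= u < t) by (unfold u; lra).
  specialize (H u). simpl in H. unfold R_dist in H.
  assert (Rabs (f u - f t) < f t - c).
  { apply H. split. split. exact I. unfold u; lra.
    rewrite Rabs_left; unfold u; lra. }
  apply Rabs_def2 in H2. specialize (Hf u Hu). lra.
Qed.

Lemma closed_ge (f : R -> R) a t c : a < t -> continuity_pt f t ->
  (forall u, a <= u < t -> c <= f u) -> c <= f t.
Proof.
  intros Hat Hc Hf.
  assert (H := closed_le (fun u => - f u) a t (- c) Hat (continuity_pt_opp f t Hc)).
  cbv beta in H. assert (- f t <= - c); [apply H; intros u Hu; specialize (Hf u Hu); lra | lra].
Qed.

Lemma cont_pos f t : continuity_pt f t -> 0 < f t ->
  exists d, 0 < d /\ forall u, Rabs (u - t) < d -> 0 < f u.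
Proof.
  intros Hc Hp.
  unfold continuity_pt, continue_in, limit1_in, limit_in in Hc.
  destruct (Hc (f t)) as [alp [Halp H]]; [lra|].
  exists alp. split; [lra|]. intros u Hu.
  destruct (Req_dec u t) as [->|Hne]; [lra|].
  specialize (H u). simpl in H. unfold R_dist in H.
  assert (Rabs (f u - f t) < f t).
  { apply H. split. split. exact I. auto. exact Hu. }
  apply Rabs_def2 in H0. lra.
Qed.

Lemma deriv_pos_right f t l : is_derive f t l -> 0 < l ->
  exists d, 0 < d /\ forall u, t < u < t + d -> f t < f u.
Proof.
  intros H Hl. apply is_derive_Reals in H.
  destruct (H (l/2)) as [del Hd]; [lra|].
  exists del. split; [apply cond_pos|]. intros u Hu.
  specialize (Hd (u - t)). replace (t + (u - t)) with u in Hd by ring.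
  assert (H1 : Rabs ((f u - f t)/(u-t) - l) < l/2).
  { apply Hd; [lra | rewrite Rabs_right; lra]. }
  apply Rabs_def2 in H1.
  assert (H2 : f u - f t = ((f u - f t)/(u - t)) * (u - t)) by (field; lra).
  assert (0 < ((f u - f t)/(u - t)) * (u - t)) by (apply Rmult_lt_0_compat; lra).
  lra.
Qed.

Lemma real_ind (P : R -> Prop) a : P a ->
  (forall t, a < t -> (forall u, a <= u < t -> P u) -> P t) ->
  (forall t, a <= t -> (forall u, a <= u <= t -> P u) ->
     exists d, 0 < d /\ forall u, t <= u < t + d -> P u) ->
  forall t, a <= t -> P t.
Proof.
  intros Pa H1 H2 t Hat.
  set (S := fun w => a <= w <= t /\ forall v, a <= v <= w -> P v).
  assert (Hb : bound S) by (exists t; intros w [Hw _]; lra).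
  assert (He : exists w, S w).
  { exists a. split; [lra|]. intros v Hv. replace v with a by lra. exact Pa. }
  destruct (completeness S Hb He) as [m [Hub Hlub]].
  assert (Ham : a <= m) by (apply Hub; destruct He; unfold S; split; [lra|];
    intros v Hv; replace v with a by lra; exact Pa).
  assert (Hmt : m <= t) by (apply Hlub; intros w [Hw _]; lra).
  assert (HA : forall u, a <= u < m -> P u).
  { intros u Hu. destruct (Classical_Prop.classic (exists w, S w /\ u < w)) as [[w [[Hw1 Hw2] Huw]]|Hn].
    - apply Hw2; lra.
    - exfalso. assert (m <= u); [|lra]. apply Hlub. intros w Hw.
      destruct (Rle_or_lt w u) as [h|h]; [exact h|]. exfalso; apply Hn; eauto. }
  assert (Pm : P m).
  { destruct (Req_dec m a) as [->|Hne]; [exact Pa|]. apply H1; [lra|exact HA]. }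
  assert (HB : forall u, a <= u <= m -> P u).
  { intros u Hu. destruct (Req_dec u m) as [->|]; [exact Pm|]. apply HA; lra. }
  destruct (Rle_lt_or_eq_dec _ _ Hmt) as [Hlt|Heq].
  - exfalso. destruct (H2 m Ham HB) as [d [Hd Hd2]].
    set (w := Rmin (m + d/2) t).
    assert (w <= m + d/2) by apply Rmin_l. assert (w <= t) by apply Rmin_r.
    assert (m < w) by (unfold w; apply Rmin_glb_lt; lra).
    assert (S w).
    { split; [lra|]. intros v Hv. destruct (Rle_or_lt v m) as [h|h].
      - apply HB; lra.
      - apply Hd2; lra. }
    assert (w <= m) by (apply Hub; auto). lra.
  - subst m. apply HB; lra.
Qed.

Lemma cos_asin_ratio ra r : 0 < ra -> ra <= r ->
  cos (asin (ra / r)) = sqrt (r^2 - ra^2) / r.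
Proof.
  intros Hra Hr.
  assert (Hr0 : 0 < r) by lra.
  rewrite cos_asin.
  2:{ split.
      - assert (0 <= ra / r) by (apply Rlt_le, Rdiv_lt_0_compat; lra). lra.
      - unfold Rdiv. apply Rmult_le_reg_r with r; [lra|].
        rewrite Rmult_assoc, Rinv_l; lra. }
  assert (HX: 0 <= r^2 - ra^2) by nra.
  assert (E: 1 - (ra/r)² = (sqrt (r^2-ra^2) / r)^2).
  { unfold Rsqr. unfold Rdiv. rewrite Rpow_mult_distr. rewrite pow2_sqrt by exact HX.
    field. lra. }
  rewrite E, sqrt_pow2; [reflexivity|].
  apply Rmult_le_pos; [apply sqrt_pos | left; apply Rinv_0_lt_compat; lra].
Qed.

Lemma sq_ge ra z : 0 <= ra -> ra <= sqrt z -> 0 <= z -> ra^2 <= z.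
Proof.
  intros H1 H2 H3. rewrite <- (pow2_sqrt z H3). nra.
Qed.

Theorem lemma2 (xT yT V k ra t0 : R) (x y psi : R -> R) :
  0 < V -> 0 < k -> 0 <= ra ->
  (forall t, 0 <= t ->
     is_derive x t (V * cos (psi t)) /\
     is_derive y t (V * sin (psi t)) /\
     is_derive psi t (control k V ra (dist_to_target x y xT yT) t)) ->
  0 <= t0 ->
  ra <= dist_to_target x y xT yT t0 ->
  (exists th0, is_bearing x y psi xT yT t0 th0 /\
     asin (ra / dist_to_target x y xT yT t0) < th0 /\
     th0 < 2 * PI - asin (ra / dist_to_target x y xT yT t0)) ->
  forall t, t0 <= t -> ra <= dist_to_target x y xT yT t.
Proof.
  intros HV Hk Hra Hder Ht0 Hr0 [th0 [[Hth [Hc Hs]] [Hlo Hhi]]] t Ht.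
  destruct (Req_dec ra 0) as [->|Hra0].
  { unfold dist_to_target; apply sqrt_pos. }
  assert (Hrap : 0 < ra) by lra.
  set (r := dist_to_target x y xT yT) in *.
  pose (q := fun u => (x u - xT)^2 + (y u - yT)^2).
  pose (D := fun u => (xT - x u) * cos (psi u) + (yT - y u) * sin (psi u)).
  pose (C := fun u => (yT - y u) * cos (psi u) - (xT - x u) * sin (psi u)).
  pose (s := fun u => sqrt (q u - ra^2)).
  pose (E := fun u => D u - s u).
  pose (Phi := fun u => E u * exp (k*V*u)).
  pose (w := fun u => control k V ra r u).
  assert (Hrq : forall u, r u = sqrt (q u)) by reflexivity.
  assert (Hq0 : forall u, 0 <= q u).
  { intro u; unfold q; apply Rplus_le_le_0_compat; apply pow2_ge_0. }
  assert (HCD : forall u, C u ^2 + D u ^2 = q u).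
  { intro u. assert (Hsc := sin2_cos2 (psi u)). unfold Rsqr in Hsc. unfold C, D, q.
    transitivity (((xT - x u)^2 + (yT - y u)^2) * (sin (psi u) * sin (psi u) + cos (psi u) * cos (psi u))).
    ring. rewrite Hsc. ring. }
  assert (Hqd : forall u, 0 <= u -> is_derive q u (-2 * V * D u)).
  { intros u Hu. destruct (Hder u Hu) as [Hx [Hy _]].
    pose proof (is_derive_pow (fun t => x t - xT) 2 u _ (is_derive_minus _ _ u _ _ Hx (is_derive_const xT u))) as H1.
    pose proof (is_derive_pow (fun t => y t - yT) 2 u _ (is_derive_minus _ _ u _ _ Hy (is_derive_const yT u))) as H2.
    pose proof (is_derive_plus _ _ _ _ _ H1 H2) as H3. simplD H3.
    eapply is_derive_eqv; [exact H3 | intro; reflexivity | ]. unfold D. simpl. ring. }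
  assert (HDd : forall u, 0 <= u -> is_derive D u (-V + w u * C u)).
  { intros u Hu. destruct (Hder u Hu) as [Hx [Hy Hp]].
    pose proof (is_derive_mult _ _ u _ _ (is_derive_minus _ _ u _ _ (is_derive_const xT u) Hx) (is_derive_comp cos psi u _ _ (is_derive_cos (psi u)) Hp) Rmult_comm) as H1.
    pose proof (is_derive_mult _ _ u _ _ (is_derive_minus _ _ u _ _ (is_derive_const yT u) Hy) (is_derive_comp sin psi u _ _ (is_derive_sin (psi u)) Hp) Rmult_comm) as H2.
    pose proof (is_derive_plus _ _ _ _ _ H1 H2) as H3. simplD H3.
    eapply is_derive_eqv; [exact H3 | intro; reflexivity | ].
    assert (Hsc := sin2_cos2 (psi u)). unfold Rsqr in Hsc. unfold w, C.
    transitivity (-V * (sin (psi u) * sin (psi u) + cos (psi u) * cos (psi u)) + control k V ra r u * ((yT - y u) * cos (psi u) - (xT - x u) * sin (psi u))).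
    ring. rewrite Hsc. ring. }
  assert (Hrd : forall u, 0 <= u -> ra^2 < q u -> is_derive r u (- V * D u / r u)).
  { intros u Hu Hq. assert (0 < q u) by nra.
    pose proof (is_derive_sqrt q u _ (Hqd u Hu) H) as H1.
    eapply is_derive_eqv; [exact H1 | intro; reflexivity | ].
    rewrite Hrq. assert (0 < sqrt (q u)) by (apply sqrt_lt_R0; lra). field. lra. }
  assert (Hsd : forall u, 0 <= u -> ra^2 < q u -> is_derive s u (- V * D u / s u)).
  { intros u Hu Hq.
    pose proof (is_derive_minus _ _ u _ _ (Hqd u Hu) (is_derive_const (ra^2) u)) as H0.
    pose proof (is_derive_sqrt _ u _ H0) as H1. simplD H1.
    assert (H2 : 0 < q u - ra^2) by lra.
    specialize (H1 H2).
    eapply is_derive_eqv; [exact H1 | intro; reflexivity | ].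
    unfold s. simpl; unfold minus, plus, opp, zero; simpl. replace (q u + - (ra * (ra * 1))) with (q u - ra * (ra * 1)) by ring. assert (0 < sqrt (q u - ra * (ra * 1))) by (apply sqrt_lt_R0; lra). field. lra. }
  assert (Hw : forall u, 0 <= u -> ra^2 < q u -> w u = k * V * E u / r u).
  { intros u Hu Hq. unfold w, control.
    assert (Hru : ra <= r u).
    { rewrite Hrq. rewrite <- (sqrt_pow2 ra) by lra. apply sqrt_le_1_alt; lra. }
    destruct (Rle_dec ra (r u)) as [_|Hn]; [|contradiction].
    rewrite (is_derive_unique r u _ (Hrd u Hu Hq)).
    rewrite Rtrigo_facts.cos_pi_minus, cos_asin_ratio by lra.
    unfold E, s. rewrite Hrq in *. rewrite pow2_sqrt by apply Hq0.
    field. lra. }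
  assert (Hexpd : forall u, is_derive (fun t => exp (k*V*t)) u (k * V * exp (k*V*u))).
  { intro u. auto_derive. auto. ring. }
  pose (df := fun u => exp (k*V*u) * E u * (k*V*C u / r u + V / s u + k*V)).
  assert (HPd : forall u, 0 <= u -> ra^2 < q u -> is_derive Phi u (df u)).
  { intros u Hu Hq.
    pose proof (is_derive_minus _ _ u _ _ (HDd u Hu) (Hsd u Hu Hq)) as H0.
    pose proof (is_derive_mult _ _ u _ _ H0 (Hexpd u) Rmult_comm) as H1. simplD H1.
    eapply is_derive_eqv; [exact H1 | intro; reflexivity | ].
    rewrite (Hw u Hu Hq). unfold df, E.
    assert (0 < s u) by (apply sqrt_lt_R0; lra).
    assert (0 < r u) by (rewrite Hrq; apply sqrt_lt_R0; nra).
    field. lra. }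
  assert (Hqc : forall u, 0 <= u -> continuity_pt q u) by (intros; eapply deriv_cont; apply Hqd; auto).
  assert (Hrc : forall u, 0 <= u -> continuity_pt r u).
  { intros u Hu. exact (continuity_pt_comp q sqrt u (Hqc u Hu) (continuity_pt_sqrt (q u) (Hq0 u))). }
  assert (HEc : forall u, 0 <= u -> ra^2 <= q u -> continuity_pt E u).
  { intros u Hu Hq. apply continuity_pt_minus.
    - eapply deriv_cont; apply HDd; auto.
    - apply (continuity_pt_comp (fun t => q t - ra^2) sqrt u).
      + eapply deriv_cont. exact (is_derive_minus _ _ u _ _ (Hqd u Hu) (is_derive_const (ra^2) u)).
      + apply continuity_pt_sqrt. lra. }
  assert (HPc : forall u, 0 <= u -> ra^2 <= q u -> continuity_pt Phi u).
  { intros u Hu Hq. apply continuity_pt_mult; [apply HEc; auto|].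
    eapply deriv_cont; apply Hexpd. }
  assert (Hr0p : 0 < r t0) by lra.
  assert (HE0 : E t0 < 0).
  { set (al := asin (ra / r t0)) in *.
    assert (Hsa : sin al = ra / r t0).
    { unfold al; apply sin_asin. split.
      - assert (0 <= ra / r t0) by (apply Rlt_le, Rdiv_lt_0_compat; lra). lra.
      - unfold Rdiv. apply Rmult_le_reg_r with (r t0); [lra|].
        rewrite Rmult_assoc, Rinv_l; lra. }
    assert (Hab := asin_bound (ra / r t0)). fold al in Hab.
    assert (HPI := PI_RGT_0).
    assert (Hal0 : 0 <= al).
    { destruct (Rle_or_lt 0 al) as [h|h]; [exact h|].
      assert (sin al < 0) by (apply sin_lt_0_var; lra).
      assert (0 < ra / r t0) by (apply Rdiv_lt_0_compat; lra). lra. }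
    assert (Hcos : cos th0 < cos al).
    { destruct (Rle_or_lt th0 PI) as [h|h].
      - apply cos_decreasing_1; lra.
      - replace (cos th0) with (cos (2*PI - th0)).
        + apply cos_decreasing_1; lra.
        + rewrite cos_minus, cos_2PI, sin_2PI. ring. }
    assert (Hcal : cos al = s t0 / r t0).
    { unfold al. rewrite cos_asin_ratio by lra. unfold s. rewrite Hrq. rewrite pow2_sqrt by apply Hq0.
      reflexivity. }
    change (r t0 * cos th0 = D t0) in Hc.
    unfold E. rewrite <- Hc.
    assert (s t0 = r t0 * cos al) by (rewrite Hcal; field; lra).
    rewrite H. nra. }
  assert (HP0 : Phi t0 < 0).
  { unfold Phi. assert (0 < exp (k*V*t0)) by apply exp_pos. nra. }
  pose (P := fun u => ra <= r u /\ Phi u <= Phi t0).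
  assert (Hmain : forall u, t0 <= u -> P u).
  { apply real_ind.
    - split; lra.
    - intros t1 Ht1 Hall.
      assert (Hr1 : ra <= r t1).
      { apply (closed_ge r t0 t1 ra Ht1 (Hrc t1 ltac:(lra))). intros u Hu. apply (Hall u Hu). }
      assert (Hq1 : ra^2 <= q t1) by (apply sq_ge; auto; lra).
      split; [exact Hr1|].
      apply (closed_le Phi t0 t1 _ Ht1 (HPc t1 ltac:(lra) Hq1)). intros u Hu. apply (Hall u Hu).
    - intros t1 Ht1 Hall.
      destruct (Hall t1) as [Hr1 HP1]; [lra|].
      assert (Hq1 : ra^2 <= q t1) by (apply sq_ge; auto; lra).
      assert (HE1 : E t1 < 0).
      { unfold Phi in HP1, HP0. assert (0 < exp (k*V*t1)) by apply exp_pos.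
        destruct (Rle_or_lt 0 (E t1)) as [h|h]; [|exact h]. nra. }
      assert (Hd1 : exists d1, 0 < d1 /\ forall u, t1 < u < t1 + d1 -> ra^2 < q u).
      { destruct (Rle_lt_or_eq_dec _ _ Hq1) as [Hlt|Heq].
        - destruct (cont_pos (fun u => q u - ra^2) t1) as [d [Hd Hd2]].
          + apply continuity_pt_minus; [apply Hqc; lra | apply continuity_pt_const; intros a b; reflexivity].
          + cbv beta; lra.
          + exists d. split; [lra|]. intros u Hu. specialize (Hd2 u). cbv beta in Hd2.
            assert (0 < q u - ra^2); [apply Hd2; rewrite Rabs_right; lra | lra].
        - assert (Hs1 : s t1 = 0) by (unfold s; rewrite <- Heq, Rminus_diag; apply sqrt_0).
          assert (D t1 < 0) by (unfold E in HE1; lra).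
          destruct (deriv_pos_right q t1 _ (Hqd t1 ltac:(lra))) as [d [Hd Hd2]]; [nra|].
          exists d. split; [lra|]. intros u Hu. specialize (Hd2 u Hu). lra. }
      destruct Hd1 as [d1 [Hd1 Hd1']].
      destruct (cont_pos (fun u => - E u) t1) as [d2 [Hd2 Hd2']].
      { apply continuity_pt_opp. apply HEc; auto; lra. }
      { cbv beta; lra. }
      exists (Rmin d1 d2). split; [apply Rmin_pos; lra|].
      assert (Rmin d1 d2 <= d1) by apply Rmin_l. assert (Rmin d1 d2 <= d2) by apply Rmin_r.
      intros u [Hu1 Hu2].
      destruct (Req_dec u t1) as [->|Hne]; [split; assumption|].
      assert (Hut : t1 < u) by lra.
      assert (Hqz : forall z, t1 <= z <= u -> ra^2 <= q z).
      { intros z Hz. destruct (Req_dec z t1) as [->|]; [exact Hq1|]. left; apply Hd1'; lra. }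
      assert (HEz : forall z, t1 <= z <= u -> E z < 0).
      { intros z Hz. specialize (Hd2' z). cbv beta in Hd2'.
        assert (0 < - E z); [apply Hd2'; apply Rabs_def1; lra | lra]. }
      split.
      + rewrite Hrq. rewrite <- (sqrt_pow2 ra) by lra. apply sqrt_le_1_alt.
        left; apply Hd1'; lra.
      + assert (Hm : Rmin t1 u = t1) by (apply Rmin_left; lra).
        assert (HM : Rmax t1 u = u) by (apply Rmax_right; lra).
        destruct (MVT_gen Phi t1 u df) as [c [Hcr Hce]].
        { cbv zeta. rewrite Hm, HM. intros z Hz. apply HPd; [lra|]. apply Hd1'; lra. }
        { cbv zeta. rewrite Hm, HM. intros z Hz. apply HPc; [lra|]. apply Hqz; lra. }
        rewrite Hm, HM in Hcr.
        assert (Hdf : df c <= 0).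
        { assert (Hec := HEz c Hcr). assert (Hqc' := Hqz c Hcr).
          assert (Hrc0 : 0 < r c) by (rewrite Hrq; apply sqrt_lt_R0; nra).
          assert (Hrr : r c ^2 = q c) by (rewrite Hrq; apply pow2_sqrt; apply Hq0).
          assert (HCc : - r c <= C c) by (assert (Hh := HCD c); nra).
          assert (H1 : 0 <= k*V*C c / r c + k*V).
          { replace (k*V*C c / r c + k*V) with (k*V*(C c + r c) / r c) by (field; lra).
            apply Rmult_le_pos; [apply Rmult_le_pos; [nra|lra] | left; apply Rinv_0_lt_compat; lra]. }
          assert (H2 : 0 <= V / s c).
          { assert (0 <= s c) by apply sqrt_pos.
            destruct (Req_dec (s c) 0) as [Hz|Hz].
            - rewrite Hz. unfold Rdiv. rewrite Rinv_0. lra.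
            - apply Rlt_le, Rdiv_lt_0_compat; lra. }
          assert (0 < exp (k*V*c)) by apply exp_pos.
          unfold df.
          assert (E c * (k*V*C c / r c + V / s c + k*V) <= 0) by nra.
          replace (exp (k*V*c) * E c * (k*V*C c / r c + V / s c + k*V))
            with (exp (k*V*c) * (E c * (k*V*C c / r c + V / s c + k*V))) by ring.
          nra. }
        assert (df c * (u - t1) <= 0) by nra.
        lra. }
  destruct (Hmain t Ht) as [H _]. exact H.
Qed.
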